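(* Let $K_1\subset\mathbb{R}^n$, $K_2\subset\wedge^2\mathbb{R}^n,\ldots,K_n\subset\wedge^n\mathbb{R}^n$ be proper cones. Suppose that for every $j=2,\ldots,n$ there exists a basis $e_1'(j),\ldots,e_n'(j)$ of $\mathbb{R}^n$ such that $K_j\subseteq K_j'$, where $K_j'\subset\wedge^j\mathbb{R}^n$ is an exterior basic cone defined by this basis. Then for every $j=2,\ldots,n$ the set $T(K_1,\ldots,K_j)$, if it is nonempty, is a cone of rank $j$ in $\mathbb{R}^n$.
   Context: A proper cone is a closed convex cone that is pointed and solid. $\wedge^j\mathbb{R}^n$ is the $j$th exterior power of $\mathbb{R}^n$. An exterior basic cone defined by a basis $e_1',\ldots,e_n'$ is a cone in $\wedge^j\mathbb{R}^n$ spanned (as nonnegative combinations) by vectors $\sigma_{i_1\ldots i_j}(e'_{i_1}\wedge\cdots\wedge e'_{i_j})$, $1\le i_1<\cdots<i_j\le n$, with each fixed sign $\sigma_{i_1\ldots i_j}\in\{\pm1\}$. Define recursively $T(K_1)=K_1\cup(-K_1)$, and for $j\ge2$, $T(K_1,\ldots,K_j)$ is the closure of the set of all $x_1\in\mathbb{R}^n$ for which there exist $x_2\in T(K_1)$, $x_3\in T(K_1,K_2),\ldots,x_j\in T(K_1,\ldots,K_{j-1})$ with $x_1\wedge\cdots\wedge x_j\in\operatorname{int}(K_j)\cup\operatorname{int}(-K_j)$. A closed set $T\subset\mathbb{R}^n$ is a cone of rank $k$ if $\alpha x\in T$ for all $x\in T,\alpha\in\mathbb{R}$, and $T$ contains at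 least one $k$-dimensional subspace and no subspace of higher dimension. *)

(* Defs.v *)
From HB Require Import structures.
From mathcomp Require Import all_boot all_order all_algebra.
From mathcomp Require Import all_classical all_reals all_analysis.
Import numFieldNormedType.Exports.
Set Implicit Arguments. Unset Strict Implicit. Unset Printing Implicit Defensive.
Import Order.TTheory GRing.Theory Num.Theory.
Local Open Scope ring_scope.
Local Open Scope classical_set_scope.

Section Exterior.
Variable R : realType.

(* j-element subsets of {0,...,n-1}: index set of the standard basis
   e_{i_1} /\ ... /\ e_{i_j} (i_1 < ... < i_j) of the j-th exterior power. *)
Definition jset (n j : nat) := {S : {set 'I_n} | #|S| == j}.

(* The j-th exterior power of R^n, in coordinates w.r.t. the standard basis
   e_{i_1} /\ ... /\ e_{i_j}; coordinate k corresponds to the subset enum_val k. *)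
Definition ext (n j : nat) := 'rV[R]_#|{: jset n j}|.

(* the elements i_1 < ... < i_j of S, in increasing order *)
Definition idx n j (S : jset n j) : 'I_j -> 'I_n :=
  fun i => @enum_val _ (mem (val S)) (cast_ord (esym (eqP (valP S))) i).

(* x_1 /\ ... /\ x_j where x_1,...,x_j are the rows of X :
   its coordinate at {i_1<...<i_j} is the minor on columns i_1,...,i_j. *)
Definition wedge n j (X : 'M[R]_(j, n)) : ext n j :=
  \row_(k < #|{: jset n j}|) \det (colsub (@idx n j (enum_val k)) X).

Definition proper_cone m (K : set 'rV[R]_m) : Prop :=
  [/\ closed K,
      (forall x y, K x -> K y -> K (x + y)),
      (forall (a : R) x, 0 <= a -> K x -> K (a *: x)),
      (forall x, K x -> K (- x) -> x = 0)
    & exists x, interior K x].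

(* exterior basic cone defined by the basis given by the rows of E
   (E invertible) and the signs (-1)^(sg S) *)
Definition ext_basic_cone n j (E : 'M[R]_n) (sg : jset n j -> bool)
  : set (ext n j) :=
  [set v | exists c : jset n j -> R, (forall S, 0 <= c S) /\
     v = \sum_(S : jset n j)
           c S *: ((-1) ^+ sg S *: wedge (rowsub (@idx n j S) E))].

Definition int_pm n j (K : set (ext n j)) : set (ext n j) :=
  interior K `|` interior [set y | K (- y)].

Variables (n : nat) (K1 : set 'rV[R]_n) (K : forall j, set (ext n j)).

(* one step of the recursion: given prev k = T(K_1,...,K_k) for k <= m+1,
   build T(K_1,...,K_{m+2}) *)
Definition Tstep (prev : nat -> set 'rV[R]_n) (m : nat) : set 'rV[R]_n :=
  closure [set x1 : 'rV[R]_n | exists xs : 'I_m.+1 -> 'rV[R]_n,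
     (forall i : 'I_m.+1, prev i.+1 (xs i)) /\
     int_pm (@K m.+2) (wedge (col_mx x1 (\matrix_(i < m.+1) xs i)))].

(* Tupto m k = T(K_1,...,K_k) for 1 <= k <= m+1 *)
Fixpoint Tupto (m : nat) : nat -> set 'rV[R]_n :=
  match m with
  | 0 => fun _ => K1 `|` [set x | K1 (- x)]
  | m'.+1 => fun k => if (k <= m'.+1)%N then Tupto m' k
                      else Tstep (Tupto m') m'
  end.

Definition Tcone (j : nat) : set 'rV[R]_n := Tupto j.-1 j.

End Exterior.

Definition subspace_in (R : realType) n (U : 'M[R]_n) (T : set 'rV[R]_n) :=
  forall v : 'rV[R]_n, (v <= U)%MS -> T v.

Definition cone_of_rank (R : realType) n (T : set 'rV[R]_n) (k : nat) : Prop :=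
  [/\ closed T,
      (forall x (a : R), T x -> T (a *: x)),
      (exists U : 'M[R]_n, \rank U = k /\ subspace_in U T)
    & (forall U : 'M[R]_n, subspace_in U T -> (\rank U <= k)%N)].

(* Main.v *)
Require Import Defs.
From HB Require Import structures.
From mathcomp Require Import all_boot all_order all_algebra.
From mathcomp Require Import all_fingroup.
From mathcomp Require Import lra ring.
From mathcomp Require Import all_classical all_reals all_analysis.
Import numFieldNormedType.Exports.
Import Order.TTheory GRing.Theory Num.Theory.
Local Open Scope ring_scope.
Local Open Scope classical_set_scope.
Set Implicit Arguments. Unset Strict Implicit. Unset Printing Implicit Defensive.

Lemma idx_inj n j (S : jset n j) : injective (idx S).
Proof. by move=> a b /enum_val_inj /cast_ord_inj. Qed.

Lemma idx_in n j (S : jset n j) i : idx S i \in val S.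
Proof. exact: enum_valP. Qed.

Lemma idx_onto n j (S : jset n j) x : x \in val S -> exists i, idx S i = x.
Proof.
move=> xS; exists (cast_ord (eqP (valP S)) (enum_rank_in xS x)).
by rewrite /idx cast_ordK enum_rankK_in.
Qed.

Lemma inj_fact n j (g : 'I_j -> 'I_n) : injective g ->
  exists S : jset n j, exists s : 'S_j, forall i, g i = idx S (s i).
Proof.
move=> gi.
have cS : #|[set g i | i in 'I_j]%SET| == j by rewrite card_imset // card_ord.
pose S : jset n j := exist (fun A : {set 'I_n} => #|A| == j) _ cS.
have H : forall i, exists k, idx S k = g i.
  by move=> i; apply: idx_onto; rewrite /= imset_f.
have [k Hk] := boolp.choice H.
have ki : injective k by move=> a b e; apply: gi; rewrite -!Hk e.
exists S, (perm ki) => i; by rewrite permE Hk.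
Qed.
Section CB.
Variable R : realType.

Lemma cb_step1 j n (A : 'M[R]_(j,n)) (B : 'M[R]_(n,j)) :
  \det (A *m B) = \sum_(f : {ffun 'I_j -> 'I_n})
      (\prod_(i < j) A i (f i)) * \det (rowsub f B).
Proof.
transitivity (\sum_(s : 'S_j) \sum_(f : {ffun 'I_j -> 'I_n})
   (-1) ^+ s * ((\prod_(i < j) A i (f i)) * \prod_(i < j) B (f i) (s i))).
  apply: eq_bigr => s _; rewrite -big_distrr /=; congr (_ * _).
  under eq_bigr do rewrite mxE.
  rewrite bigA_distr_bigA /=; apply: eq_bigr => f _.
  by rewrite -big_split.
rewrite exchange_big /=; apply: eq_bigr => f _.
rewrite /determinant big_distrr /=; apply: eq_bigr => s _.
rewrite mulrCA; congr (_ * (_ * _)); apply: eq_bigr => i _.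
by rewrite mxE.
Qed.


Lemma cauchy_binet j n (A : 'M[R]_(j,n)) (B : 'M[R]_(n,j)) :
  \det (A *m B) = \sum_(S : jset n j) \det (colsub (idx S) A) * \det (rowsub (idx S) B).
Proof.
rewrite cb_step1 (bigID (fun f : {ffun 'I_j -> 'I_n} => injectiveb f)) /=.
rewrite [X in _ + X]big1 ?addr0; last first.
  move=> f /injectivePn [i1 [i2 Di12 Ef12]].
  by rewrite (determinant_alternate Di12) ?mulr0 // => k; rewrite !mxE Ef12.
pose h (p : (jset n j * 'S_j)%type) : {ffun 'I_j -> 'I_n} :=
  [ffun i => idx p.1 (p.2 i)].
have hinj : injective h.
  move=> [S s] [S' s'] /finfun.ffunP /= E.
  have ES : S = S'.
    apply: val_inj; apply/eqP; rewrite eqEcard (eqP (valP S)) (eqP (valP S')) leqnn andbT.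
    idtac.
    apply/fintype.subsetP => x /idx_onto [k <-].
    have := E (s^-1 k)%g; rewrite !ffunE /= permKV => ->; exact: idx_in.
  subst S'; congr (_, _); apply/permP => i.
  by have := E i; rewrite !ffunE /= => /idx_inj.
rewrite (eq_bigl (fun f => f \in [set h p | p in setT]%SET)); last first.
  move=> f; apply/idP/idP.
    move=> /injectiveP /inj_fact [S [s Hs]]; apply/imsetP; exists (S, s); first by rewrite inE.
    by apply/finfun.ffunP => i; rewrite ffunE.
  move=> /imsetP [[S s] _ ->]; apply/injectiveP => a b.
  by rewrite !ffunE /= => /idx_inj /perm_inj.
rewrite big_imset /=; last by move=> p q _ _; apply: hinj.
rewrite (eq_bigl xpredT); last by move=> p /=; exact: (@in_setT _ p).
rewrite -(pair_big xpredT xpredT (fun S s => (\prod_(i < j) A i (h (S, s) i)) * \det (rowsub (h (S, s)) B))) /=.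
apply: eq_bigr => S _.
have Er : forall s : 'S_j, rowsub (h (S, s)) B = perm_mx s *m rowsub (idx S) B.
  move=> s; rewrite -row_permE row_permEsub -rowsub_comp.
  by apply/matrixP => a b; rewrite !mxE ffunE.
under eq_bigr do rewrite Er det_mulmx det_perm.
rewrite /(determinant (colsub _ _)) big_distrl /=; apply: eq_bigr => s _.
rewrite mulrA [_ * (-1) ^+ _]mulrC; congr (_ * _ * _).
by apply: eq_bigr => i _; rewrite ffunE mxE.
Qed.
End CB.

Section Top.
Variable R : realType.

Lemma near0_pos (P : R -> Prop) : (\forall t \near (0:R), P t) ->
  exists2 t, 0 < t & P t.
Proof.
move=> /nbhs_ballP [e /= e0 He]; exists (e / 2); first by rewrite divr_gt0.
apply: He; rewrite -ball_normE /= sub0r normrN ger0_norm; first by lra.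
by rewrite divr_ge0 // ltW.
Qed.

Lemma near_line m (C : set 'rV[R]_m) (v w : 'rV[R]_m) : nbhs v C ->
  exists2 t : R, 0 < t & C (v + t *: w).
Proof.
move=> Cv; apply: near0_pos.
have H : (fun t : R => v + t *: w) t @[t --> (0:R)] --> v.
  rewrite -[X in _ --> X]addr0 -[X in _ + X](scale0r w).
  apply: cvgD; first exact: cvg_cst.
  by apply: cvgZr_tmp; exact: cvg_id.
exact: H.
Qed.


Lemma lin_near n p (M : 'M[R]_(n,p)) (c : 'I_p) (z : 'rV[R]_n) (a : R) :
  0 < (z *m M) 0 c * a -> \forall y \near z, 0 < (y *m M) 0 c * a.
Proof.
move=> d0.
set d := (z *m M) 0 c * a in d0 *.
set S := \sum_i `|M i c * a|.
have S0 : 0 <= S by apply: sumr_ge0 => i _.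
have B0 : 0 < S + 1 by lra.
apply/nbhs_ballP; exists (d / (S + 1)); first by rewrite /= divr_gt0.
move=> y [_ yz].
set e := d / (S + 1).
have Hd : `|(y *m M) 0 c * a - d| <= e * S.
  have -> : (y *m M) 0 c * a - d = \sum_i (y 0 i - z 0 i) * (M i c * a).
    rewrite /d !mxE !big_distrl -sumrB; apply: eq_bigr => i _ /=.
    by rewrite mulrBl !mulrA.
  rewrite /S mulr_sumr.
  apply: le_trans (ler_norm_sum _ _ _) _; apply: ler_sum => i _.
  rewrite normrM; apply: ler_wpM2r => //.
  have := yz 0 i; rewrite -ball_normE /= => /ltW; by rewrite distrC.
have : e * S < d.
  have -> : d = e * (S + 1) by rewrite /e mulfVK // gt_eqF.
  rewrite ltr_pM2l ?divr_gt0 //; lra.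
move: Hd; rewrite ler_norml => /andP [H1 _]; lra.
Qed.

End Top.

Section Alg.
Variables (R : realType) (n j : nat) (E : 'M[R]_n).

Definition dvec (S' : jset n j) : 'cV[R]_#|{: jset n j}| :=
  \col_k \det (rowsub (idx (enum_val k)) (colsub (idx S') (invmx E))).

Definition phi S' (u : ext R n j) : R := (u *m dvec S') 0 0.

Lemma phiD S' u v : phi S' (u + v) = phi S' u + phi S' v.
Proof. by rewrite /phi mulmxDl mxE. Qed.

Lemma phiZ S' a u : phi S' (a *: u) = a * phi S' u.
Proof. by rewrite /phi -scalemxAl mxE. Qed.

Lemma phiN S' u : phi S' (- u) = - phi S' u.
Proof. by rewrite /phi mulNmx mxE. Qed.

Lemma phi_sum S' (I : finType) (f : I -> ext R n j) :
  phi S' (\sum_i f i) = \sum_i phi S' (f i).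
Proof. by rewrite /phi mulmx_suml summxE. Qed.

Lemma phi_wedge S' (X : 'M[R]_(j, n)) :
  phi S' (wedge X) = \det (colsub (idx S') (X *m invmx E)).
Proof.
rewrite -mulmx_colsub cauchy_binet /phi mxE.
rewrite (big_enum_val (A := {: jset n j})) /=.
by apply: eq_bigr => k _; rewrite !mxE.
Qed.

Lemma phi_w (Eu : E \in unitmx) S S' :
  phi S' (wedge (rowsub (idx S) E)) = (S == S')%:R.
Proof.
rewrite phi_wedge mul_rowsub_mx mulmxV //.
have -> : colsub (idx S') (rowsub (idx S) 1%:M) =
          \matrix_(a, b) (idx S a == idx S' b)%:R :> 'M[R]_j.
  by apply/matrixP => a b; rewrite !mxE.
have [<-|neq] := eqVneq S S'.
  rewrite (_ : \matrix_(a, b) _ = 1%:M) ?det1 //.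
  by apply/matrixP => a b; rewrite !mxE (inj_eq (@idx_inj _ _ S)).
have [a Ha] : exists a, idx S a \notin val S'.
  apply/existsP; apply: contraR neq; rewrite negb_exists => /forallP H.
  apply/eqP; apply: val_inj; apply/eqP.
  rewrite eqEcard (eqP (valP S)) (eqP (valP S')) leqnn andbT.
  apply/fintype.subsetP => x xS.
  have [i <-] : exists i, idx S i = x.
    exists (cast_ord (eqP (valP S)) (enum_rank_in xS x)).
    by rewrite /idx cast_ordK enum_rankK_in.
  by have := H i; rewrite negbK.
rewrite (expand_det_row _ a) big1 // => b _; rewrite !mxE.
case: eqP => [E1|]; last by rewrite mul0r.
by move: Ha; rewrite E1 idx_in.
Qed.


Lemma sgnsq (b : bool) : (-1) ^+ b * (-1) ^+ b = 1 :> R.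
Proof. by case: b; rewrite ?expr1 ?expr0 ?mulrNN ?mulr1. Qed.

Lemma basic_psi (Eu : E \in unitmx) (sg : jset n j -> bool) S' u :
  ext_basic_cone E sg u -> 0 <= (-1) ^+ sg S' * phi S' u.
Proof.
move=> [c [c0 ->]]; rewrite phi_sum.
under eq_bigr do rewrite !phiZ phi_w //.
rewrite (bigD1 S') //= big1 ?addr0; last first.
  by move=> S /negbTE nS; rewrite nS mulr0 mulr0.
by rewrite eqxx mulr1 mulrCA sgnsq mulr1 c0.
Qed.

Lemma int_sign (Eu : E \in unitmx) (sg : jset n j -> bool) (K : set (ext R n j))
  (HK : K `<=` ext_basic_cone E sg) v :
  int_pm K v -> exists b : bool, forall S',
    0 < (-1) ^+ b * ((-1) ^+ sg S' * phi S' v).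
Proof.
have gen S' : (-1) ^+ sg S' * phi S' ((-1) ^+ sg S' *: wedge (rowsub (idx S') E)) = 1.
  by rewrite phiZ phi_w // eqxx mulr1 sgnsq.
case=> [Kv|Kmv].
  exists false => S'; rewrite expr0 mul1r.
  have Cv : nbhs v (ext_basic_cone E sg) by apply: (interiorS HK).
  have [t t0 Ct] := near_line (- ((-1) ^+ sg S' *: wedge (rowsub (idx S') E))) Cv.
  have := basic_psi Eu S' Ct.
  rewrite phiD (phiZ S' t) phiN mulrN mulrDr mulrN mulrCA gen mulr1; lra.
exists true => S'; rewrite expr1 mulN1r oppr_gt0.
have Cv : nbhs v [set y | ext_basic_cone E sg (- y)].
  by apply: (interiorS _ Kmv) => y /= /HK.
have [t t0 Ct] := near_line ((-1) ^+ sg S' *: wedge (rowsub (idx S') E)) Cv.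
have := basic_psi Eu S' Ct.
rewrite phiN phiD (phiZ S' t) mulrN mulrDr mulrCA gen mulr1; lra.
Qed.

End Alg.

Section Lap.
Variable R : realType.

Lemma colsub_perm_det j n (Y : 'M[R]_(j,n)) (g : 'I_j -> 'I_n) (s : 'S_j)
  (S : jset n j) : (forall i, g i = idx S (s i)) ->
  \det (colsub g Y) = (-1) ^+ s * \det (colsub (idx S) Y).
Proof.
move=> Hg.
have -> : colsub g Y = colsub s (colsub (idx S) Y).
  by rewrite -colsub_comp; apply/matrixP => a b; rewrite !mxE /= Hg.
by rewrite -col_permEsub col_permE det_mulmx det_perm odd_permV mulrC.
Qed.

Lemma laplace j n (Y : 'M[R]_(j.+1, n)) (g0 : 'I_j.+2 -> 'I_n) :
  \sum_(k < j.+2) Y 0 (g0 k) * ((-1) ^+ k * \det (colsub (g0 \o lift k) Y)) = 0.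
Proof.
pose Z := \matrix_(i < j.+2, k < j.+2) Y (inord i.-1) (g0 k).
have Z0 : \det Z = 0.
  apply: (@determinant_alternate _ _ _ 0 1) => // k.
  by rewrite !mxE.
rewrite -[RHS]Z0 (expand_det_row Z 0); apply: eq_bigr => k _.
rewrite /cofactor !mxE add0n.
have -> : (inord (@nat_of_ord j.+2 0).-1 : 'I_j.+1) = 0 by apply/val_inj; rewrite /= inordK.
congr (_ * (_ * _)); congr (\det _).
apply/matrixP => a b; rewrite !mxE.
have -> : (inord (lift (0 : 'I_j.+2) a).-1 : 'I_j.+1) = a.
  by apply/val_inj; rewrite lift0 /= inordK.
by [].
Qed.

End Lap.

Section Cone.
Variable R : realType.

Definition Aset n m (P : ('I_m.+1 -> 'rV[R]_n) -> Prop) (KK : set (ext R n m.+2))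
  : set 'rV[R]_n :=
  [set x1 : 'rV[R]_n | exists xs : 'I_m.+1 -> 'rV[R]_n, P xs /\
     int_pm KK (wedge (col_mx x1 (\matrix_(i < m.+1) xs i)))].

Lemma wedgeM j n (M : 'M[R]_j) (X : 'M[R]_(j,n)) :
  wedge (M *m X) = \det M *: wedge X.
Proof. by apply/rowP => k; rewrite !mxE -mulmx_colsub det_mulmx. Qed.

Lemma nbhs_scale m (S : set 'rV[R]_m) (c : R) (v : 'rV[R]_m) : c != 0 -> nbhs v S ->
  nbhs (c *: v) [set y | S (c^-1 *: y)].
Proof.
move=> c0 Sv.
have H : (fun y : 'rV[R]_m => c^-1 *: y) y @[y --> c *: v] --> v.
  rewrite -[X in _ --> X](scale1r v) -(mulVf c0) -scalerA.
  exact: (cvgZ (cvg_cst _) cvg_id).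
exact: H.
Qed.

Lemma int_pm_scale n j (KK : set (ext R n j))
  (cone : forall (a : R) x, 0 <= a -> KK x -> KK (a *: x)) (c : R) v :
  c != 0 -> int_pm KK v -> int_pm KK (c *: v).
Proof.
move=> c0 Hv.
have cc (y : ext R n j) : c *: (c^-1 *: y) = y by rewrite scalerA mulfV // scale1r.
have [cp|cn] := ltrP 0 c.
  case: Hv => H; [left|right].
    apply: filterS (nbhs_scale c0 H) => y /= Ky.
    by rewrite -(cc y); apply: cone => //; exact: ltW.
  apply: filterS (nbhs_scale c0 H) => y /= Ky.
  by rewrite -(cc y) -scalerN; apply: cone => //; exact: ltW.
have cn' : 0 <= - c by rewrite oppr_ge0.
case: Hv => H; [right|left].
  apply: filterS (nbhs_scale c0 H) => y /= Ky.
  by rewrite -{1}(cc y) -scaleNr; apply: cone.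
apply: filterS (nbhs_scale c0 H) => y /= Ky.
have -> : y = (- c) *: (- (c^-1 *: y)) by rewrite scaleNr scalerN opprK cc.
by apply: cone.
Qed.


Lemma Aset_mul n m (P : ('I_m.+1 -> 'rV[R]_n) -> Prop) (KK : set (ext R n m.+2))
  (cone : forall (a : R) x, 0 <= a -> KK x -> KK (a *: x)) (x : 'rV[R]_n) xs
  (a : 'rV[R]_(1 + m.+1)) :
  P xs -> int_pm KK (wedge (col_mx x (\matrix_(i < m.+1) xs i))) -> a 0 0 != 0 ->
  Aset P KK (a *m col_mx x (\matrix_(i < m.+1) xs i)).
Proof.
move=> Pxs Hint a0; exists xs; split => //.
set XS := \matrix_(i < m.+1) xs i in Hint *.
have -> : col_mx (a *m col_mx x XS) XS =
    block_mx (lsubmx a) (rsubmx a) 0 1%:M *m col_mx x XS.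
  by rewrite block_mxEv mul_col_mx hsubmxK mul_row_col mul0mx mul1mx add0r.
rewrite wedgeM det_ublock det1 mulr1 det_mx11.
have -> : lsubmx a 0 0 = a 0 0 by rewrite mxE; congr (a 0 _); apply: val_inj.
exact: int_pm_scale.
Qed.

Lemma Aset_closure n m (P : ('I_m.+1 -> 'rV[R]_n) -> Prop) (KK : set (ext R n m.+2))
  (cone : forall (a : R) x, 0 <= a -> KK x -> KK (a *: x)) (x : 'rV[R]_n) xs
  (a : 'rV[R]_(1 + m.+1)) :
  P xs -> int_pm KK (wedge (col_mx x (\matrix_(i < m.+1) xs i))) ->
  closure (Aset P KK) (a *m col_mx x (\matrix_(i < m.+1) xs i)).
Proof.
move=> Pxs Hint.
have [a0|a0] := eqVneq (a 0 0) 0; last by apply: subset_closure; apply: Aset_mul.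
move=> B Bv; have [t t0 Bt] := near_line x Bv.
set XS := \matrix_(i < m.+1) xs i in Hint Bt *.
have E1 : a *m col_mx x XS + t *: x = (a + t *: row_mx 1 0) *m col_mx x XS.
  by rewrite mulmxDl -scalemxAl mul_row_col mul1mx mul0mx addr0.
exists (a *m col_mx x XS + t *: x); split => //.
rewrite E1; apply: Aset_mul => //.
have r10 : (row_mx (1 : 'M[R]_1) (0 : 'M[R]_(1, m.+1))) 0 0 = 1.
  rewrite (_ : (0 : 'I_(1 + m.+1)) = lshift m.+1 0) ?row_mxEl ?mxE //.
  exact/val_inj.
by rewrite mxE [X in _ + X]mxE r10 a0 add0r mulr1 gt_eqF.
Qed.

End Cone.

Section MainL.
Variable R : realType.

Lemma main_scale n m (P : ('I_m.+1 -> 'rV[R]_n) -> Prop) (KK : set (ext R n m.+2))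
  (cone : forall (a : R) x, 0 <= a -> KK x -> KK (a *: x)) z (c : R) :
  Aset P KK !=set0 -> closure (Aset P KK) z -> closure (Aset P KK) (c *: z).
Proof.
move=> [x0 [xs0 [Pxs0 Hint0]]] Hz.
have [->|c0] := eqVneq c 0.
  rewrite scale0r.
  have := Aset_closure (a := 0) cone Pxs0 Hint0; by rewrite mul0mx.
move=> B Bcz.
have := nbhs_scale (invr_neq0 c0) Bcz.
rewrite scalerA mulVf // scale1r => /Hz [y [[xs [Pxs Hint]] By]].
rewrite invrK in By.
exists (c *: y); split => //.
have -> : c *: y = row_mx (c%:M) 0 *m col_mx y (\matrix_(i < m.+1) xs i).
  by rewrite mul_row_col mul0mx addr0 mul_scalar_mx.
apply: Aset_mul => //.
rewrite (_ : (0 : 'I_(1 + m.+1)) = lshift m.+1 0) ?row_mxEl ?mxE ?eqxx ?mulr1n //.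
exact/val_inj.
Qed.


Lemma main_sub n m (P : ('I_m.+1 -> 'rV[R]_n) -> Prop) (KK : set (ext R n m.+2))
  (cone : forall (a : R) x, 0 <= a -> KK x -> KK (a *: x))
  (E : 'M[R]_n) (sg : jset n m.+2 -> bool) (Eu : E \in unitmx)
  (HK : KK `<=` ext_basic_cone E sg) (hn : (m.+2 <= n)%N) x0 :
  Aset P KK x0 -> exists U : 'M[R]_n, \rank U = m.+2 /\ subspace_in U (closure (Aset P KK)).
Proof.
move=> [xs [Pxs Hint]].
have rX : \rank (col_mx x0 (\matrix_(i < m.+1) xs i)) = m.+2.
  pose S0 := [set widen_ord hn i | i in 'I_m.+2]%SET.
  have cS : #|S0| == m.+2 by rewrite card_imset ?card_ord //; by move=> a b /(congr1 val) /= /val_inj.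
  pose S' : jset n m.+2 := exist (fun A : {set 'I_n} => #|A| == m.+2) _ cS.
  have [b Hb] := int_sign Eu HK Hint.
  have := Hb S'; rewrite phi_wedge => H.
  set Y := col_mx x0 (\matrix_(i < m.+1) xs i) *m invmx E in H.
  have dn : \det (colsub (idx S') Y) != 0.
    by apply/eqP => d0; move: H; rewrite d0 !mulr0 ltxx.
  apply/eqP; rewrite eqn_leq rank_leq_row /=.
  have : \rank (colsub (idx S') Y) = m.+2 by rewrite mxrank_unit // unitmxE unitfE.
  rewrite -(mulmx1 Y) -mulmx_colsub => <-.
  apply: leq_trans (mxrankM_maxl _ _) _; exact: mxrankM_maxl.
exists (pid_mx m.+2 *m col_mx x0 (\matrix_(i < m.+1) xs i)); split.
  by rewrite mxrankMfree ?rank_pid_mx // /row_free rX.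
move=> v /submxP [b ->]; rewrite mulmxA.
exact: Aset_closure.
Qed.


Lemma main_bound n m (P : ('I_m.+1 -> 'rV[R]_n) -> Prop) (KK : set (ext R n m.+2))
  (E : 'M[R]_n) (sg : jset n m.+2 -> bool) (Eu : E \in unitmx)
  (HK : KK `<=` ext_basic_cone E sg) (U : 'M[R]_n) :
  subspace_in U (closure (Aset P KK)) -> (\rank U <= m.+2)%N.
Proof.
move=> HU; rewrite leqNgt; apply/negP => hr.
set V := U *m invmx E.
have rV : \rank V = \rank U by rewrite mxrankMfree // row_free_unit unitmx_inv.
pose f := maxrankfun V^T.
have hr' : (m.+3 <= \rank V^T)%N by rewrite mxrank_tr rV.
pose g0 := fun k : 'I_m.+3 => f (widen_ord hr' k).
have g0i : injective g0.
  by move=> a b /maxrankfun_inj /(congr1 val) /= /val_inj.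
have fullM : row_full (colsub f V).
  by rewrite /row_full -mxrank_tr trmx_mxsub; exact: maxrowsub_free.
have Hf : forall k : 'I_m.+3, exists p : (jset n m.+2 * 'S_m.+2)%type,
    forall i, (g0 \o lift k) i = idx p.1 (p.2 i).
  move=> k; have [S [s Hs]] := inj_fact (inj_comp g0i (@lift_inj _ k)).
  by exists (S, s).
have [pk Hpk] := boolp.choice Hf.
pose tau (k : 'I_m.+3) : R := (-1) ^+ k * (-1) ^+ (pk k).2 * (-1) ^+ sg (pk k).1.
have tau2 k : tau k * tau k = 1.
  rewrite /tau.
  set p := (-1) ^+ k; set q := (-1) ^+ (pk k).2; set r := (-1) ^+ sg (pk k).1.
  have -> : p * q * r * (p * q * r) = (p * p) * (q * q) * (r * r) by ring.
  by rewrite /p /q /r -!expr2 !sqrr_sign !mul1r.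
pose t : 'rV[R]_(\rank V^T) := \row_i (if (i < m.+3)%N then tau (inord i) else 0).
have /submxP [a ta] : (t <= colsub f V)%MS by apply: submx_full.
pose z := a *m U.
have Tz : closure (Aset P KK) z by apply: HU; exact: submxMl.
have zc k : (z *m invmx E) 0 (g0 k) = tau k.
  have -> : (z *m invmx E) 0 (g0 k) = (a *m colsub f V) 0 (widen_ord hr' k).
    by rewrite /z /V -mulmxA mulmx_colsub [RHS]mxE.
  rewrite -ta mxE /= ltn_ord; congr (tau _); exact: inord_val.
have Nz : \forall y \near z, forall k, 0 < (y *m invmx E) 0 (g0 k) * tau k.
  have Hk k : \forall y \near z, 0 < (y *m invmx E) 0 (g0 k) * tau k.
    by apply: lin_near; rewrite zc tau2; exact: ltr01.
  exact: filter_forall Hk.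
have [x [[xs [Pxs Hint]] Nx]] := Tz _ Nz.
have [b Hb] := int_sign Eu HK Hint.
set Y := col_mx x (\matrix_(i < m.+1) xs i) *m invmx E.
have Lap := laplace Y g0.
have Y0 k : Y 0 (g0 k) = (x *m invmx E) 0 (g0 k).
  rewrite /Y mul_col_mx (_ : (0 : 'I_(1 + m.+1)) = lshift m.+1 0) ?col_mxEu //.
  exact/val_inj.
have pos k : 0 < (-1) ^+ b * (Y 0 (g0 k) * ((-1) ^+ k * \det (colsub (g0 \o lift k) Y))).
  rewrite (colsub_perm_det Y (Hpk k)).
  have h1 := Nx k; rewrite -Y0 in h1.
  have h2 := Hb (pk k).1; rewrite phi_wedge -/Y in h2.
  move: h1 h2; rewrite /tau.
  set yv := Y 0 (g0 k); set D := \det (colsub (idx (pk k).1) Y).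
  set p := (-1) ^+ k; set q := (-1) ^+ (pk k).2; set r := (-1) ^+ sg (pk k).1.
  set e := (-1) ^+ b => h1 h2.
  have rr : r * r = 1 by rewrite /r -expr2 sqrr_sign.
  have -> : e * (yv * (p * (q * D))) = (yv * (p * q * r)) * (e * (r * D)).
    transitivity (e * (yv * (p * (q * D))) * (r * r)); first by rewrite rr mulr1.
    ring.
  by apply: mulr_gt0.
move: Lap => /(congr1 (fun s => (-1) ^+ b * s)); rewrite mulr0 big_distrr /=.
rewrite (bigD1 ord0) //=.
have := pos ord0.
have : 0 <= \sum_(i < m.+3 | i != ord0) (-1) ^+ b * (Y 0 (g0 i) * ((-1) ^+ i * \det (colsub (g0 \o lift i) Y))).
  by apply: sumr_ge0 => i _; apply: ltW.
lra.
Qed.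

End MainL.

Theorem theorem6 (R : realType) (n : nat) (K1 : set 'rV[R]_n)
  (K : forall j : nat, set (ext R n j)) :
  proper_cone K1 ->
  (forall j, (2 <= j <= n)%N -> proper_cone (K j)) ->
  (forall j, (2 <= j <= n)%N ->
     exists (E : 'M[R]_n) (sg : jset n j -> bool),
       E \in unitmx /\ K j `<=` ext_basic_cone E sg) ->
  forall j, (2 <= j <= n)%N ->
    Tcone K1 K j !=set0 -> cone_of_rank (Tcone K1 K j) j.
Proof.
move=> _ PK HE j /andP [j2 jn].
case: j j2 jn => [|[|m]] // _ jn.
have hj : (2 <= m.+2 <= n)%N by rewrite jn.
have [E [sg [Eu HK]]] := HE m.+2 hj.
have [_ _ Kcone _ _] := PK m.+2 hj.
set P := fun xs : 'I_m.+1 -> 'rV[R]_n => forall i : 'I_m.+1, Tupto K1 K m i.+1 (xs i).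
have TE : Tcone K1 K m.+2 = closure (Aset P (K m.+2)).
  by rewrite /Tcone /= ltnn.
rewrite TE => Tne.
have Ane : Aset P (K m.+2) !=set0.
  have [A0|] := eqVneq (Aset P (K m.+2)) set0.
    by move: Tne; rewrite A0 closure0 => -[].
  by move/set0P.
split.
- exact: closed_closure.
- by move=> x a Tx; apply: main_scale Kcone _ _ Ane Tx.
- have [x0 Ax0] := Ane; have H := main_sub Kcone Eu HK jn Ax0; exact: H.
- by move=> U HU; apply: main_bound Eu HK U HU.
Qed.
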